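(* Let $k$ be a positive integer and suppose that $a/b$ and $x/y$ are adjacent vertices of $\mathcal F_k$. Then every neighbor of $a/b$ in $\mathcal F_k$ has the form $\frac{x+am}{y+bm}$ for some $m\in\mathbb Z$.
   Context: The vertex set $V$ consists of all reduced fractions $p/q$ with $p,q\in\mathbb Z$, $\gcd(p,q)=1$, together with $1/0$; here $p/q$ and $(-p)/(-q)$ denote the same vertex. For vertices define $d(p/q,a/b)=|pb-qa|$. The graph $\mathcal F_k$ has vertex set $V$, with an edge between $p/q$ and $a/b$ exactly when $d(p/q,a/b)=k$. *)

(* Defs.v *)
From Stdlib Require Export ZArith.
Open Scope Z_scope.

(* A vertex of F_k is represented by an integer pair (p, q) with gcd p q = 1,
   standing for the reduced fraction p/q (1/0 is the pair (1,0)).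
   The pairs (p,q) and (-p,-q) denote the same vertex. *)
Definition is_vertex (p q : Z) : Prop := Z.gcd p q = 1.

Definition same_vertex (p q a b : Z) : Prop :=
  (p = a /\ q = b) \/ (p = - a /\ q = - b).

Definition dF (p q a b : Z) : Z := Z.abs (p * b - q * a).

Definition adjF (k p q a b : Z) : Prop :=
  is_vertex p q /\ is_vertex a b /\ dF p q a b = k.

(* Main.v *)
Require Import Defs.
From Stdlib Require Import ZArith Lia Znumtheory.

Lemma core (a b x y c d : Z) :
  Z.gcd a b = 1 -> a * d - b * c = a * y - b * x ->
  exists m, c = x + a * m /\ d = y + b * m.
Proof.
  intros Hg He.
  destruct (Zgcd_is_gcd a b) as [_ _ _].
  assert (HB : Bezout a b 1).
  { rewrite <- Hg. apply Zis_gcd_bezout. apply Zgcd_is_gcd. }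
  destruct HB as [u v Huv].
  exists (u * (c - x) + v * (d - y)).
  assert (E : a * (d - y) = b * (c - x)) by lia.
  split.
  - assert (a * (u * (c - x) + v * (d - y)) = (u * a + v * b) * (c - x)).
    { replace (a * (u * (c - x) + v * (d - y))) with (u * a * (c - x) + v * (a * (d - y))) by ring.
      rewrite E. ring. }
    rewrite H, Huv. ring.
  - assert (b * (u * (c - x) + v * (d - y)) = (u * a + v * b) * (d - y)).
    { replace (b * (u * (c - x) + v * (d - y))) with (u * (b * (c - x)) + v * b * (d - y)) by ring.
      rewrite <- E. ring. }
    rewrite H, Huv. ring.
Qed.

Theorem lemma2p2 (k a b x y : Z) :
  0 < k ->
  adjF k a b x y ->
  forall c d : Z, adjF k a b c d ->
  exists m : Z, same_vertex c d (x + a * m) (y + b * m).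
Proof.
  intros _ [Hab [_ H1]] c d [_ [_ H2]].
  unfold dF in *.
  destruct (Z.eq_dec (a * d - b * c) (a * y - b * x)) as [E|E].
  - destruct (core a b x y c d Hab E) as [m [-> ->]].
    exists m. left. auto.
  - assert (E' : a * (- d) - b * (- c) = a * y - b * x) by lia.
    destruct (core a b x y (-c) (-d) Hab E') as [m [Hc Hd]].
    exists m. right. lia.
Qed.
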